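(* Let $G$ be a group and $\preceq$ a left-ordering on $G$. Then $\preceq$ is Conradian if and only if the action of $G$ on the totally ordered set $(G,\preceq)$ by left translations admits no crossing.
   Context: A left-ordering on a group $G$ is a total order $\preceq$ with $f\prec g\Rightarrow hf\prec hg$ for all $f,g,h\in G$. It is Conradian if for all $f\succ id$ and $g\succ id$ there is $n\in\mathbb{N}$ with $fg^n\succ g$. If $G$ acts by order-preserving bijections on a totally ordered set $(\Omega,\le)$, a crossing for the action is a 5-tuple $(f,g,u,v,w)$ with $f,g\in G$ and $u,v,w\in\Omega$ such that: (i) $u<w<v$; (ii) for every $n\in\mathbb{N}$, $g^n u<v$ and $f^n v>u$; (iii) there exist $M,N\in\mathbb{N}$ with $f^N v<w<g^M u$. The left translation action is $g\cdot h=gh$. *)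

(* Defs.v *)
From Stdlib Require Import Arith.

Record Group := {
  carrier :> Type;
  gmul : carrier -> carrier -> carrier;
  gone : carrier;
  ginv : carrier -> carrier;
  gmul_assoc : forall a b c, gmul a (gmul b c) = gmul (gmul a b) c;
  gmul_one_l : forall a, gmul gone a = a;
  gmul_one_r : forall a, gmul a gone = a;
  gmul_inv_l : forall a, gmul (ginv a) a = gone;
  gmul_inv_r : forall a, gmul a (ginv a) = gone
}.

Fixpoint gpow (G : Group) (g : G) (n : nat) : G :=
  match n with
  | O => gone G
  | S k => gmul G g (gpow G g k)
  end.

Definition total_order {T : Type} (le : T -> T -> Prop) : Prop :=
  (forall x, le x x) /\
  (forall x y z, le x y -> le y z -> le x z) /\
  (forall x y, le x y -> le y x -> x = y) /\
  (forall x y, le x y \/ le y x).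

Definition strict {T : Type} (le : T -> T -> Prop) (x y : T) : Prop :=
  le x y /\ x <> y.

Definition left_ordering (G : Group) (le : G -> G -> Prop) : Prop :=
  total_order le /\
  (forall f g h, strict le f g -> strict le (gmul G h f) (gmul G h g)).

Definition conradian (G : Group) (le : G -> G -> Prop) : Prop :=
  forall f g, strict le (gone G) f -> strict le (gone G) g ->
    exists n : nat, strict le g (gmul G f (gpow G g n)).

Definition crossing (G : Group) {Omega : Type} (leO : Omega -> Omega -> Prop)
  (act : G -> Omega -> Omega) (f g : G) (u v w : Omega) : Prop :=
  strict leO u w /\ strict leO w v /\
  (forall n : nat, strict leO (act (gpow G g n) u) v /\
                   strict leO u (act (gpow G f n) v)) /\
  (exists M N : nat, strict leO (act (gpow G f N) v) w /\
                     strict leO w (act (gpow G g M) u)).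

Definition left_translation (G : Group) (g h : G) : G := gmul G g h.

(* Main.v *)
Require Import Defs.
From Stdlib Require Import Arith Lia Classical.

Lemma ginv_mul_l (G : Group) (a b : G) : gmul G (ginv G a) (gmul G a b) = b.
Proof. rewrite gmul_assoc, gmul_inv_l, gmul_one_l. reflexivity. Qed.

Lemma mul_inv_cancel (G : Group) (a b : G) : gmul G a (gmul G (ginv G a) b) = b.
Proof. rewrite gmul_assoc, gmul_inv_r, gmul_one_l. reflexivity. Qed.

Lemma mulK (G : Group) (x u : G) : gmul G (gmul G x u) (ginv G u) = x.
Proof. rewrite <- gmul_assoc, gmul_inv_r, gmul_one_r. reflexivity. Qed.

Lemma gpow_add (G : Group) (g : G) m n :
  gpow G g (m + n) = gmul G (gpow G g m) (gpow G g n).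
Proof.
  induction m as [|m IH]; simpl.
  - rewrite gmul_one_l; reflexivity.
  - rewrite IH, gmul_assoc; reflexivity.
Qed.

Lemma gpow_mul (G : Group) (g : G) M n :
  gpow G (gpow G g M) n = gpow G g (M * n).
Proof.
  induction n as [|n IH]; simpl.
  - rewrite Nat.mul_0_r; reflexivity.
  - rewrite IH, Nat.mul_succ_r, Nat.add_comm, gpow_add; reflexivity.
Qed.

Lemma gpow_S_r (G : Group) (g : G) n :
  gpow G g (S n) = gmul G (gpow G g n) g.
Proof.
  replace (S n) with (n + 1) by lia. rewrite gpow_add. simpl.
  rewrite gmul_one_r; reflexivity.
Qed.

Lemma gpow_conj (G : Group) (u a : G) n :
  gpow G (gmul G (ginv G u) (gmul G a u)) n = gmul G (ginv G u) (gmul G (gpow G a n) u).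
Proof.
  induction n as [|n IH]; simpl.
  - rewrite gmul_one_l, gmul_inv_l; reflexivity.
  - rewrite IH. rewrite !gmul_assoc. rewrite mulK. reflexivity.
Qed.

Section Ord.
End Ord.

Lemma lt_mul_l (G : Group) le (H : left_ordering G le) (h x y : G) :
  strict le x y -> strict le (gmul G h x) (gmul G h y).
Proof. intro; apply H; auto. Qed.

Lemma lt_cancel (G : Group) le (H : left_ordering G le) (h x y : G) :
  strict le (gmul G h x) (gmul G h y) -> strict le x y.
Proof.
  intro Hl. apply (lt_mul_l G le H (ginv G h)) in Hl.
  rewrite !ginv_mul_l in Hl; exact Hl.
Qed.

Lemma le_mul_l (G : Group) le (H : left_ordering G le) (h x y : G) :
  le x y -> le (gmul G h x) (gmul G h y).
Proof.
  intro Hxy. destruct (classic (x = y)) as [->|Hn].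
  - destruct H as [[Hr _] _]; apply Hr.
  - apply (lt_mul_l G le H h x y). split; auto.
Qed.

Lemma lt_trans' (G : Group) le (H : left_ordering G le) (x y z : G) :
  strict le x y -> strict le y z -> strict le x z.
Proof.
  destruct H as [[Hr [Ht [Ha Htot]]] _]. intros [H1 H2] [H3 H4]. split.
  - eauto.
  - intro; subst. apply H2. apply Ha; auto.
Qed.

Lemma le_lt_trans' (G : Group) le (H : left_ordering G le) (x y z : G) :
  le x y -> strict le y z -> strict le x z.
Proof.
  intros H1 H2. destruct (classic (x = y)) as [->|Hn]; auto.
  apply (lt_trans' G le H x y z); auto. split; auto.
Qed.

Lemma lt_asym (G : Group) le (H : left_ordering G le) (x y : G) :
  strict le x y -> strict le y x -> False.
Proof.
  intros H1 H2. destruct (lt_trans' G le H x y x H1 H2). auto.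
Qed.

Lemma not_lt_le (G : Group) le (H : left_ordering G le) (x y : G) :
  ~ strict le x y -> le y x.
Proof.
  destruct H as [[Hr [Ht [Ha Htot]]] _]. intro Hn.
  destruct (Htot x y) as [H1|H1]; auto.
  destruct (classic (x = y)) as [->|H2]; auto.
  exfalso; apply Hn; split; auto.
Qed.

Lemma pow_nonneg (G : Group) le (H : left_ordering G le) (g : G) n :
  strict le (gone G) g -> le (gone G) (gpow G g n).
Proof.
  intro Hg. induction n as [|n IH]; simpl.
  - destruct H as [[Hr _] _]; apply Hr.
  - apply (le_mul_l G le H g) in IH. rewrite gmul_one_r in IH.
    destruct H as [[Hr [Ht _]] _]. eapply Ht; [apply Hg|exact IH].
Qed.

Lemma pow_lt_S (G : Group) le (H : left_ordering G le) (g : G) n :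
  strict le (gone G) g -> strict le (gpow G g n) (gpow G g (S n)).
Proof.
  intro Hg. rewrite gpow_S_r.
  pose proof (lt_mul_l G le H (gpow G g n) _ _ Hg) as Hx.
  rewrite gmul_one_r in Hx. exact Hx.
Qed.

Theorem theoremA (G : Group) (le : G -> G -> Prop) :
  left_ordering G le ->
  (conradian G le <->
   ~ exists (f g u v w : G), crossing G le (left_translation G) f g u v w).
Proof.
  intro H. split.
  - intros Hc [f [g [u [v [w Hcr]]]]].
    unfold crossing, left_translation in Hcr.
    destruct Hcr as [Huw [Hwv [Hn [M [N [HF HG]]]]]].
    set (F := gpow G f N). set (Gm := gpow G g M).
    set (y := gmul G (ginv G u) (gmul G Gm u)).
    set (x := gmul G (ginv G u) (gmul G F (gmul G Gm u))).
    assert (Hy : strict le (gone G) y).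
    { apply (lt_cancel G le H u). unfold y. rewrite mul_inv_cancel, gmul_one_r.
      eapply lt_trans'; eauto. }
    assert (Hx : strict le (gone G) x).
    { apply (lt_cancel G le H u). unfold x. rewrite mul_inv_cancel, gmul_one_r.
      destruct (Hn (N * 2)) as [_ H2].
      rewrite <- gpow_mul in H2. simpl in H2. rewrite gmul_one_r in H2.
      fold F in H2. rewrite <- gmul_assoc in H2.
      eapply lt_trans'; [eauto| exact H2 |].
      apply lt_mul_l; auto. eapply lt_trans'; eauto. }
    destruct (Hc x y Hx Hy) as [n Hc1].
    unfold y in Hc1 at 2. rewrite gpow_conj in Hc1.
    unfold x, y in Hc1.
    assert (E : gmul G (gmul G (ginv G u) (gmul G F (gmul G Gm u)))
                  (gmul G (ginv G u) (gmul G (gpow G Gm n) u))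
                = gmul G (ginv G u) (gmul G F (gmul G (gmul G Gm (gpow G Gm n)) u))).
    { rewrite !gmul_assoc. rewrite mulK. reflexivity. }
    rewrite E in Hc1. apply lt_cancel in Hc1; auto.
    change (gmul G Gm (gpow G Gm n)) with (gpow G Gm (S n)) in Hc1.
    unfold Gm in Hc1. rewrite gpow_mul in Hc1.
    destruct (Hn (M * S n)) as [H3 _].
    apply (lt_mul_l G le H F) in H3.
    apply (lt_asym G le H _ _ Hc1).
    eapply lt_trans'; [eauto| exact H3 |]. eapply lt_trans'; eauto.
  - intros Hnc f g Hf Hg.
    destruct (classic (exists n, strict le g (gmul G f (gpow G g n)))) as [E|Hno];
      [exact E|exfalso].
    assert (Hlt : forall n, strict le (gmul G f (gpow G g n)) g).
    { intro n. split.
      - apply (not_lt_le G le H). intro; apply Hno; eauto.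
      - intro Heq. apply Hno. exists (S n). rewrite <- Heq at 1.
        apply lt_mul_l; auto. apply pow_lt_S; auto. }
    assert (Hfg : strict le (gone G) (gmul G (ginv G f) g)).
    { pose proof (Hlt 0) as H0. simpl in H0. rewrite gmul_one_r in H0.
      apply (lt_mul_l G le H (ginv G f)) in H0. rewrite gmul_inv_l in H0. exact H0. }
    assert (Hv : forall n, strict le (gpow G g n) (gmul G (ginv G f) g)).
    { intro n. apply (lt_cancel G le H f). rewrite mul_inv_cancel. apply Hlt. }
    apply Hnc. exists f, g, (gone G), (gmul G (ginv G f) g), (gpow G g 2).
    unfold crossing, left_translation. split; [|split; [|split]].
    + eapply le_lt_trans'; [eauto| apply (pow_nonneg G le H g 1); auto|].
      apply pow_lt_S; auto.
    + apply Hv.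
    + intro n. rewrite gmul_one_r. split; [apply Hv|].
      eapply le_lt_trans'; [eauto| apply (pow_nonneg G le H f n); auto|].
      pose proof (lt_mul_l G le H (gpow G f n) _ _ Hfg) as Hx.
      rewrite gmul_one_r in Hx. exact Hx.
    + exists 3, 1. rewrite gmul_one_r. split.
      * simpl gpow at 1. rewrite gmul_one_r, mul_inv_cancel.
        pose proof (pow_lt_S G le H g 1 Hg) as Hx. simpl gpow at 1 in Hx.
        rewrite gmul_one_r in Hx. exact Hx.
      * apply pow_lt_S; auto.
Qed.
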